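(* Let $d\geq 1$, let $p_1<\dots<p_d$ be the first $d$ prime numbers, let $N\geq 1$ be an integer, let $C>1$ and $\varepsilon\in\mathbb{R}$. Let $\mathbf{S}_1$ be the $(d+1)\times d$ matrix whose $i$-th column has entry $\ln p_i$ in row $i$, entry $C\ln p_i$ in row $d+1$ and zeros elsewhere, and let $\mathbf{t}=(0,\dots,0,C\ln N)^T$. Let $\mathbf{z}\in\mathbb{Z}^d$, put $$u=\prod_{1\le i\le d,\ z_i>0}p_i^{z_i},\qquad k=\prod_{1\le i\le d,\ z_i<0}p_i^{-z_i},$$ and suppose $\|\mathbf{S}_1\mathbf{z}-\mathbf{t}\|_1\leq\varepsilon$. Then $$|u-kN|\leq\frac{\sqrt{N}}{C}\exp\left(\frac{\varepsilon}{2}\right).$$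
   Context: $\ln$ is the natural logarithm, $\|\cdot\|_1$ the $\ell^1$ norm; empty products equal $1$. *)

(* Defs.v *)
(* concrete reals R, integers Z. Indices are 0-based: i = 0..d-1. *)
From Stdlib Require Import Reals ZArith Znumtheory.
Open Scope R_scope.

Fixpoint sumR (n : nat) (f : nat -> R) : R :=
  match n with O => 0 | S m => sumR m f + f m end.

Fixpoint prodZ (n : nat) (f : nat -> Z) : Z :=
  match n with O => 1%Z | S m => (prodZ m f * f m)%Z end.

Definition first_primes (d : nat) (p : nat -> Z) : Prop :=
  (forall i, (i < d)%nat -> prime (p i)) /\
  (forall i j, (i < j)%nat -> (j < d)%nat -> (p i < p j)%Z) /\
  (forall q : Z, prime q -> (q <= p (d - 1)%nat)%Z ->
     exists i, (i < d)%nat /\ p i = q).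

Definition S1 (d : nat) (C : R) (p : nat -> Z) (r c : nat) : R :=
  if Nat.eqb r d then C * ln (IZR (p c))
  else if Nat.eqb r c then ln (IZR (p c)) else 0.

Definition tvec (d : nat) (C : R) (N : nat) (r : nat) : R :=
  if Nat.eqb r d then C * ln (INR N) else 0.

Definition matvec (n : nat) (M : nat -> nat -> R) (z : nat -> Z) (r : nat) : R :=
  sumR n (fun c => M r c * IZR (z c)).

Definition l1norm (m : nat) (v : nat -> R) : R := sumR m (fun r => Rabs (v r)).

Definition u_of (d : nat) (p : nat -> Z) (z : nat -> Z) : Z :=
  prodZ d (fun i => if Z.ltb 0 (z i) then (p i ^ z i)%Z else 1%Z).
Definition k_of (d : nat) (p : nat -> Z) (z : nat -> Z) : Z :=
  prodZ d (fun i => if Z.ltb (z i) 0 then (p i ^ (- z i))%Z else 1%Z).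

(* Main.v *)
Require Import Defs.
From Stdlib Require Import Reals ZArith Znumtheory Lra Lia.
From Coquelicot Require Import Coquelicot.
Open Scope R_scope.


Lemma cosh_mono a b : 0 <= b <= a -> exp b + exp (-b) <= exp a + exp (-a).
Proof.
  intros [Hb Ha].
  assert (E: exp a + exp (-a) - (exp b + exp (-b)) = (exp a - exp b) * (1 - exp (-(a+b)))).
  { rewrite Ropp_plus_distr, exp_plus, !exp_Ropp. 
    assert (exp a > 0) by apply exp_pos. assert (exp b > 0) by apply exp_pos. field; lra. }
  assert (exp b <= exp a).
  { destruct (Req_dec a b); [subst; lra| left; apply exp_increasing; lra]. }
  assert (exp (-(a+b)) <= 1).
  { rewrite <- exp_0. destruct (Req_dec (a+b) 0). rewrite H0. replace (-0) with 0 by ring. lra.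
    left. apply exp_increasing. lra. }
  nra.
Qed.

Lemma key C y : 1 < C -> 0 <= y -> C * (exp y - exp (-y)) <= exp (C*y).
Proof.
  intros HC Hy.
  set (h := fun t => (exp (C*t) - exp (-(C*t))) - C * (exp t - exp (-t))).
  set (h' := fun t => C * (exp (C*t) + exp (-(C*t))) - C * (exp t + exp (-t))).
  assert (h y >= 0).
  { destruct (Req_dec y 0).
    - subst. unfold h. rewrite Rmult_0_r, Ropp_0, exp_0. lra.
    - destruct (MVT_cor2 h h' 0 y) as [c [Hc1 Hc2]]. lra.
      + intros c _. apply is_derive_Reals. unfold h, h'. auto_derive; auto. ring.
      + assert (h 0 = 0) by (unfold h; rewrite Rmult_0_r, Ropp_0, exp_0; lra).
        assert (h' c >= 0).
        { unfold h'. assert (exp c + exp (-c) <= exp (C*c) + exp (-(C*c))) by (apply cosh_mono; nra). nra. }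
        nra. }
  unfold h in H. assert (exp (-(C*y)) > 0) by apply exp_pos. lra.
Qed.


Lemma claim C x : 1 < C -> C * Rabs (exp x - 1) <= exp (x/2) * exp (C * (Rabs x / 2)).
Proof.
  intros HC.
  assert (Hx2 : exp x = exp (x/2) * exp (x/2)) by (rewrite <- exp_plus; f_equal; field).
  assert (Hi : exp (x/2) * exp (-(x/2)) = 1) by (rewrite <- exp_plus, <- exp_0; f_equal; ring).
  assert (exp (x/2) > 0) by apply exp_pos.
  destruct (Rle_or_lt 0 x).
  - rewrite (Rabs_right x) by lra.
    pose proof (key C (x/2) HC ltac:(lra)).
    replace (x/2) with (x/2) in H1 by ring.
    assert (exp x - 1 = exp (x/2) * (exp (x/2) - exp (-(x/2)))) by nra.
    assert (exp x - 1 >= 0).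
    { assert (1 <= exp x) by (rewrite <- exp_0; destruct H0; [left; apply exp_increasing; lra| subst; lra]). lra. }
    rewrite Rabs_right by lra. rewrite H2. replace (C * (x/2)) with (C*(x/2)) by ring.
    replace (C * (exp (x / 2) * (exp (x / 2) - exp (- (x / 2))))) with (exp (x/2) * (C * (exp (x / 2) - exp (- (x / 2))))) by ring.
    apply Rmult_le_compat_l; lra.
  - rewrite (Rabs_left x) by lra.
    pose proof (key C (-x/2) HC ltac:(lra)).
    replace (- - x / 2) with (x/2) in H1 by field.
    assert (1 - exp x = exp (x/2) * (exp (-x/2) - exp (x/2))).
    { replace (-x/2) with (-(x/2)) by field. nra. }
    assert (exp x < 1) by (rewrite <- exp_0; apply exp_increasing; lra).
    rewrite Rabs_left by lra. replace (- (exp x - 1)) with (1 - exp x) by ring. rewrite H2.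
    replace (C * (- x / 2)) with (C * (-x/2)) in H1 by ring.
    replace (C * (exp (x / 2) * (exp (-x / 2) - exp (x / 2)))) with (exp (x/2) * (C * (exp (-x / 2) - exp (x / 2)))) by ring.
    replace (C * (- x / 2)) with (C * (-x/2)) by ring.
    apply Rmult_le_compat_l; [lra|]. replace (C * (- x / 2)) with (C * (-x/2)) by ring. replace (- (- x / 2)) with (x/2) in H1 by field. exact H1.
Qed.

Lemma final a b L C eps : 1 < C -> a + b + C * Rabs (a - b - L) <= eps ->
  Rabs (exp a - exp b * exp L) <= sqrt (exp L) / C * exp (eps / 2).
Proof.
  intros HC He.
  set (x := a - b - L).
  assert (Ea : exp a = exp (b+L) * exp x) by (rewrite <- exp_plus; f_equal; unfold x; ring).
  rewrite (exp_plus b L) in Ea. rewrite Ea.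
  replace (exp b * exp L * exp x - exp b * exp L) with (exp b * exp L * (exp x - 1)) by ring.
  rewrite <- exp_plus, Rabs_mult, (Rabs_right (exp (b+L))) by (left; apply exp_pos).
  assert (Hs : sqrt (exp L) = exp (L/2)).
  { rewrite <- (sqrt_square (exp (L/2))) by (left; apply exp_pos). f_equal. rewrite <- exp_plus. f_equal; field. }
  rewrite Hs.
  pose proof (claim C x HC).
  assert (exp (L/2) * exp ((a + b + C * Rabs x)/2) <= exp (L/2) * exp (eps/2)).
  { apply Rmult_le_compat_l. left; apply exp_pos. destruct (Req_dec ((a + b + C * Rabs x)/2) (eps/2)).
    rewrite H0; lra. left; apply exp_increasing. fold x in He. lra. }
  assert (exp (L/2) * exp ((a + b + C * Rabs x)/2) = exp (b+L) * (exp (x/2) * exp (C * (Rabs x / 2)))).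
  { rewrite <- !exp_plus. f_equal. unfold x. field. }
  assert (exp (b+L) > 0) by apply exp_pos.
  apply Rmult_le_reg_l with C. lra.
  replace (C * (exp (L / 2) / C * exp (eps / 2))) with (exp (L/2) * exp (eps/2)) by (field; lra).
  nra.
Qed.

Lemma sumR_ext n f g : (forall i, (i < n)%nat -> f i = g i) -> sumR n f = sumR n g.
Proof. induction n; simpl; intros H; [reflexivity|]. rewrite IHn by (intros; apply H; lia). rewrite H by lia. reflexivity. Qed.
Lemma sumR_plus n f g : sumR n (fun i => f i + g i) = sumR n f + sumR n g.
Proof. induction n; simpl; [ring|]. rewrite IHn. ring. Qed.
Lemma sumR_scal n c f : sumR n (fun i => c * f i) = c * sumR n f.
Proof. induction n; simpl; [ring|]. rewrite IHn. ring. Qed.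
Lemma sumR_delta n r g : sumR n (fun c => if Nat.eqb r c then g c else 0) = if Nat.ltb r n then g r else 0.
Proof.
  induction n; simpl. destruct r; reflexivity.
  rewrite IHn. destruct (lt_eq_lt_dec r n) as [[H|H]|H].
  - rewrite (proj2 (Nat.ltb_lt r n) H), (proj2 (Nat.ltb_lt r (S n))) by lia.
    rewrite (proj2 (Nat.eqb_neq r n)) by lia. ring.
  - subst. rewrite Nat.eqb_refl, (proj2 (Nat.ltb_ge n n)), (proj2 (Nat.ltb_lt n (S n))) by lia. ring.
  - rewrite (proj2 (Nat.ltb_ge r n)), (proj2 (Nat.ltb_ge r (S n))) by lia.
    rewrite (proj2 (Nat.eqb_neq r n)) by lia. ring.
Qed.
Lemma prodZ_exp n f g : (forall i, (i < n)%nat -> IZR (f i) = exp (g i)) -> IZR (prodZ n f) = exp (sumR n g).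
Proof. induction n; simpl; intros H. rewrite exp_0; reflexivity.
  rewrite mult_IZR, IHn by (intros; apply H; lia). rewrite H by lia. rewrite exp_plus; reflexivity. Qed.
Lemma IZR_pow_exp (p e : Z) : (0 < p)%Z -> (0 <= e)%Z -> IZR (p ^ e) = exp (IZR e * ln (IZR p)).
Proof.
  intros Hp He. rewrite <- (Z2Nat.id e) at 1 by lia. rewrite <- pow_IZR, <- Rpower_pow by (apply IZR_lt; lia).
  unfold Rpower. rewrite INR_IZR_INZ, Z2Nat.id by lia. reflexivity.
Qed.

Theorem lemma2 (d : nat) (p : nat -> Z) (N : nat) (C eps : R) (z : nat -> Z) :
  (1 <= d)%nat ->
  first_primes d p ->
  (1 <= N)%nat ->
  1 < C ->
  l1norm (S d) (fun r => matvec d (S1 d C p) z r - tvec d C N r) <= eps ->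
  Rabs (IZR (u_of d p z) - IZR (k_of d p z) * INR N)
    <= sqrt (INR N) / C * exp (eps / 2).
Proof.
  intros Hd [Hpr _] HN HC Heps.
  assert (Hp : forall i, (i < d)%nat -> (2 <= p i)%Z) by (intros; apply prime_ge_2, Hpr; auto).
  assert (Hl : forall i, (i < d)%nat -> 0 <= ln (IZR (p i))).
  { intros i Hi. rewrite <- ln_1. apply Rlt_le, ln_increasing. lra. apply IZR_lt. specialize (Hp i Hi). lia. }
  set (g := fun i => IZR (z i) * ln (IZR (p i))).
  set (a := sumR d (fun i => if Z.ltb 0 (z i) then g i else 0)).
  set (b := sumR d (fun i => if Z.ltb (z i) 0 then - g i else 0)).
  assert (Hu : IZR (u_of d p z) = exp a).
  { unfold u_of, a. apply prodZ_exp. intros i Hi. destruct (Z.ltb_spec 0 (z i)).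
    - unfold g. apply IZR_pow_exp; specialize (Hp i Hi); lia.
    - rewrite exp_0; reflexivity. }
  assert (Hk : IZR (k_of d p z) = exp b).
  { unfold k_of, b. apply prodZ_exp. intros i Hi. destruct (Z.ltb_spec (z i) 0).
    - unfold g. rewrite IZR_pow_exp by (specialize (Hp i Hi); lia). rewrite opp_IZR. f_equal; ring.
    - rewrite exp_0; reflexivity. }
  assert (HNp : 0 < INR N) by (apply lt_0_INR; lia).
  assert (HL : INR N = exp (ln (INR N))) by (rewrite exp_ln; auto).
  rewrite Hu, Hk, HL.
  apply final; auto.
  unfold l1norm in Heps. simpl sumR in Heps.
  assert (E1 : sumR d (fun r => Rabs (matvec d (S1 d C p) z r - tvec d C N r)) = a + b).
  { unfold a, b. rewrite <- sumR_plus. apply sumR_ext. intros r Hr.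
    assert (matvec d (S1 d C p) z r - tvec d C N r = g r).
    { unfold tvec, matvec. rewrite (proj2 (Nat.eqb_neq r d)) by lia.
      rewrite (sumR_ext d _ (fun c => if Nat.eqb r c then g c else 0)).
      rewrite sumR_delta, (proj2 (Nat.ltb_lt r d)) by lia. ring.
      intros c Hc. unfold S1, g. rewrite (proj2 (Nat.eqb_neq r d)) by lia.
      destruct (Nat.eqb_spec r c). subst; ring. ring. }
    rewrite H. specialize (Hl r Hr). unfold g.
    destruct (Z.ltb_spec 0 (z r)); destruct (Z.ltb_spec (z r) 0); try lia.
    - rewrite Rabs_right. ring. apply Rle_ge, Rmult_le_pos; auto. apply IZR_le; lia.
    - rewrite Rabs_left1. ring. assert (IZR (z r) <= 0) by (apply IZR_le; lia). nra.
    - assert (z r = 0%Z) by lia. rewrite H2. rewrite Rmult_0_l, Rabs_R0. ring. }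
  assert (E2 : matvec d (S1 d C p) z d - tvec d C N d = C * (a - b - ln (INR N))).
  { unfold tvec, matvec. rewrite Nat.eqb_refl.
    rewrite (sumR_ext d _ (fun c => C * ((if Z.ltb 0 (z c) then g c else 0) + - (if Z.ltb (z c) 0 then - g c else 0)))).
    rewrite sumR_scal, sumR_plus.
    assert (forall n f, sumR n (fun i => - f i) = - sumR n f).
    { intros n f. induction n; simpl. ring. rewrite IHn. ring. }
    rewrite H. fold a b. ring.
    intros c Hc. unfold S1, g. rewrite Nat.eqb_refl.
    destruct (Z.ltb_spec 0 (z c)); destruct (Z.ltb_spec (z c) 0); try lia.
    ring. ring. assert (z c = 0%Z) by lia. rewrite H1. ring. }
  rewrite E1, E2, Rabs_mult, (Rabs_right C) in Heps by lra. exact Heps.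
Qed.
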